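(* Let $\omega\ge2$ and let $\Gamma$ be a finite simple graph that is $\omega$-clique regular and a non-boring $\mathrm{srg}(n,k,\lambda,\mu)$. Then $\Gamma$ and $C_\omega(\Gamma)$ are strongly regular graphs with the same parameters if and only if $k=\omega(\omega-1)$.
   Context: A graph is $\omega$-clique regular if it has a nonempty edge set and every edge lies in exactly one clique of order $\omega$. $C_\omega(\Gamma)$ has as vertices the cliques of order $\omega$ of $\Gamma$, two distinct ones adjacent iff they have nonempty intersection. $\mathrm{srg}(n,k,\lambda,\mu)$: $n$ vertices, $k$-regular, adjacent vertices have $\lambda$ common neighbours, distinct non-adjacent vertices have $\mu$ common neighbours. An srg is boring if it has at most two distinct adjacency eigenvalues, non-boring otherwise. *)

(* Defs.v *)
From mathcomp Require Import all_boot all_order all_algebra algC.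
Set Implicit Arguments. Unset Strict Implicit. Unset Printing Implicit Defensive.
Import GRing.Theory Num.Theory.

(* A finite simple graph: vertex finType T, adjacency e : rel T,
   assumed symmetric and irreflexive (as hypotheses of the theorem). *)

Section Defs.
Variable T : finType.
Variable e : rel T.

Definition is_clique (S : {set T}) : bool :=
  [forall x in S, forall y in S, (x != y) ==> e x y].

Definition is_wclique (w : nat) (S : {set T}) : bool :=
  is_clique S && (#|S| == w).

Definition clique_regular (w : nat) : Prop :=
  (exists x y, e x y) /\
  forall x y, e x y ->
    #|[set S : {set T} | is_wclique w S && (x \in S) && (y \in S)]| = 1.

Definition clq (w : nat) := {S : {set T} | is_wclique w S}.

Definition clq_adj (w : nat) : rel (clq w) :=
  fun A B => (A != B) && (val A :&: val B != set0).

Definition is_srg (n k l m : nat) : Prop :=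
  [/\ #|T| = n,
      forall x, #|[set y | e x y]| = k,
      forall x y, e x y -> #|[set z | e x z && e y z]| = l &
      forall x y, x != y -> ~~ e x y -> #|[set z | e x z && e y z]| = m].

Definition adjmx : 'M[algC]_#|T| :=
  \matrix_(i, j) ((e (enum_val i) (enum_val j))%:R)%R.

Definition boring : Prop :=
  exists a b : algC, forall c, eigenvalue adjmx c -> c = a \/ c = b.

End Defs.

Definition Cgraph (T : finType) (e : rel T) (w : nat) : rel (clq e w) :=
  clq_adj (e:=e) (w:=w).

(* Main.v *)
Require Import Defs.
From mathcomp Require Import all_boot all_order all_algebra algC.
From mathcomp Require Import ring.
Set Implicit Arguments. Unset Strict Implicit. Unset Printing Implicit Defensive.
Import GRing.Theory Num.Theory.

Lemma sumb_card (U : finType) (P : pred U) :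
  (\sum_(u : U) (P u : nat))%N = #|[set u | P u]|.
Proof.
rewrite -sum1_card [RHS]big_mkcond /=; apply: eq_bigr => u _; rewrite inE.
by case: (P u).
Qed.

Section Comb.
Variables (T : finType) (e : rel T) (w n k l m : nat).
Hypotheses (esym : symmetric e) (eirr : irreflexive e) (w2 : (2 <= w)%N)
  (creg : clique_regular e w) (srg : is_srg e n k l m).

Local Notation C := (clq e w).

Lemma clique_adj (L : C) x y : x \in val L -> y \in val L -> x != y -> e x y.
Proof.
case: L => S /= /andP[/forall_inP H _] hx hy nxy.
by have /forall_inP/(_ y hy) := H x hx; rewrite nxy.
Qed.

Lemma cardL (L : C) : #|val L| = w.
Proof. by case: L => S /= /andP[_ /eqP]. Qed.

Definition cnt x y := #|[set L : C | (x \in val L) && (y \in val L)]|.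

Lemma cnt_adj x y : e x y -> cnt x y = 1%N.
Proof.
move=> exy; case: creg => _ /(_ x y exy) <-.
rewrite /cnt -(card_imset _ val_inj).
apply: eq_card => S; rewrite [in RHS]inE; apply/imsetP/idP.
  by case=> L; rewrite inE => /andP[hx hy] ->; case: L hx hy => S' /= -> -> ->.
case/andP => /andP[hS hx] hy; exists (exist _ S hS) => //.
by rewrite inE /= hx hy.
Qed.

Lemma cnt_off x y : x != y -> cnt x y = e x y.
Proof.
move=> nxy; case exy: (e x y); first exact: cnt_adj.
apply/eqP; rewrite cards_eq0; apply/eqP/setP => L; rewrite !inE.
apply/negP => /andP[hx hy]; by rewrite (clique_adj hx hy nxy) in exy.
Qed.

Lemma two_meet (L M : C) x y : x \in val L -> y \in val L ->
  x \in val M -> y \in val M -> x != y -> L = M.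
Proof.
move=> hxL hyL hxM hyM nxy.
have /eqP/cards1P [a Ha] := cnt_adj (clique_adj hxL hyL nxy).
have : L \in [set a] by rewrite -Ha inE hxL hyL.
have : M \in [set a] by rewrite -Ha inE hxM hyM.
by rewrite !inE => /eqP -> /eqP ->.
Qed.

Lemma deg_r x : k = (cnt x x * (w - 1))%N.
Proof.
case: srg => _ hk _ _.
rewrite -(hk x) -sumb_card.
transitivity (\sum_(y : T) \sum_(L : C) ((x \in val L) && (y \in val L) && (y != x) : nat))%N.
  apply: eq_bigr => y _.
  have [->|nyx] := eqVneq y x.
    by rewrite eirr big1 // => L _; rewrite andbF.
  have nxy : x != y by rewrite eq_sym.
  rewrite -(cnt_off nxy) /cnt -sumb_card; apply: eq_bigr => L _; by rewrite andbT.
rewrite exchange_big /= /cnt -sumb_card big_distrl /=.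
apply: eq_bigr => L _.
case hx: (x \in val L) => /=; last by rewrite big1.
rewrite sumb_card mul1n.
have h := cardsD1 x (val L); rewrite hx cardL add1n in h.
rewrite [X in _ = X - 1]h subn1 /=; apply: eq_card => y; by rewrite !inE andbC.
Qed.

Lemma flag : (\sum_x cnt x x = #|{: C}| * w)%N.
Proof.
rewrite /cnt; under eq_bigr do rewrite -sumb_card.
rewrite exchange_big /=.
transitivity (\sum_(L : C) w)%N; last by rewrite sum_nat_const.
apply: eq_bigr => L _; rewrite sumb_card; apply: etrans (cardL L).
by apply: eq_card => y; rewrite inE andbb.
Qed.

Lemma pk : (#|T| * k = #|{: C}| * (w * (w - 1)))%N.
Proof.
transitivity (\sum_(x : T) k)%N; first by rewrite sum_nat_const.
by rewrite (eq_bigr _ (fun x _ => deg_r x)) -big_distrl /= flag mulnA.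
Qed.

Lemma cnt_w (hk : k = (w * (w - 1))%N) x : cnt x x = w.
Proof.
have := deg_r x; rewrite hk => /eqP.
by rewrite eqn_pmul2r ?subn_gt0 // eq_sym => /eqP.
Qed.

Lemma pq (hk : k = (w * (w - 1))%N) : #|T| = #|{: C}|.
Proof.
have := pk; rewrite -hk => /eqP; rewrite eqn_pmul2r; first by move/eqP.
by rewrite hk muln_gt0 subn_gt0 w2 (leq_trans _ w2).
Qed.

Local Open Scope ring_scope.

Definition vx (i : 'I_#|T|) : T := enum_val i.
Definition vc (j : 'I_#|{: C}|) : C := enum_val j.
Definition Nm : 'M[int]_(#|T|, #|{: C}|) :=
  \matrix_(i, j) ((vx i \in val (vc j)) : nat)%:R.
Definition Am : 'M[int]_#|T| := \matrix_(i, j) (e (vx i) (vx j) : nat)%:R.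
Definition Cm : 'M[int]_#|{: C}| :=
  \matrix_(i, j) (Cgraph (vc i) (vc j) : nat)%:R.
Definition Bm := Nm^T *m Nm.
Definition Ym := Nm *m Nm^T.

Lemma natb_mul (a b : bool) :
  ((a : nat)%:R * (b : nat)%:R : int) = (a && b : nat)%:R.
Proof. by case: a; case: b. Qed.

Lemma sumb_int (U : finType) (P : pred U) :
  \sum_(u : U) ((P u : nat)%:R : int) = (#|[set u | P u]|)%:R.
Proof. by rewrite -natr_sum sumb_card. Qed.

Lemma sum_enum (U : finType) (F : U -> int) :
  \sum_(i < #|U|) F (enum_val i) = \sum_(x : U) F x.
Proof. by rewrite -big_enum_val. Qed.

Lemma Ym_entry i j : Ym i j = (cnt (vx i) (vx j))%:R.
Proof.
rewrite !mxE; under eq_bigr do rewrite !mxE natb_mul.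
rewrite (sum_enum (fun L : C => ((vx i \in val L) && (vx j \in val L) : nat)%:R)).
by rewrite sumb_int.
Qed.


Lemma Am2_entry i j :
  (Am *m Am) i j = (#|[set z | e (vx i) z && e (vx j) z]|)%:R.
Proof.
rewrite !mxE; under eq_bigr do rewrite !mxE natb_mul.
rewrite (sum_enum (fun z : T => (e (vx i) z && e z (vx j) : nat)%:R)).
by rewrite sumb_int; congr (_%:R); apply: eq_card => z; rewrite !inE (esym z).
Qed.

Lemma Bm_entry i j :
  Bm i j = (#|[set x | (x \in val (vc i)) && (x \in val (vc j))]|)%:R.
Proof.
rewrite !mxE; under eq_bigr do rewrite !mxE natb_mul.
by rewrite (sum_enum (fun x : T => ((x \in val (vc i)) && (x \in val (vc j)) : nat)%:R)) sumb_int.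
Qed.

Lemma Cg_sym : symmetric (@Cgraph T e w).
Proof. by move=> L M; rewrite /Cgraph /clq_adj eq_sym setIC. Qed.

Lemma Cm2_entry i j :
  (Cm *m Cm) i j = (#|[set Z | Cgraph (vc i) Z && Cgraph (vc j) Z]|)%:R.
Proof.
rewrite !mxE; under eq_bigr do rewrite !mxE natb_mul.
rewrite (sum_enum (fun Z : C => (Cgraph (vc i) Z && Cgraph Z (vc j) : nat)%:R)).
by rewrite sumb_int; congr (_%:R); apply: eq_card => z; rewrite !inE (Cg_sym z).
Qed.

Let W : int := w%:R.
Let D : int := l%:R - m%:R.
Let E : int := k%:R - m%:R.
Let mu : int := m%:R.

Lemma vx_neq i j : i != j -> vx i != vx j.
Proof. by rewrite (inj_eq enum_val_inj). Qed.

Lemma Y_def (hk : k = (w * (w - 1))%N) : Ym = Am + W%:M.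
Proof.
apply/matrixP => i j; rewrite Ym_entry !mxE.
have [<-|nij] := eqVneq i j.
  by rewrite cnt_w // eirr add0r mulr1n.
by rewrite cnt_off ?vx_neq // mulr0n addr0.
Qed.

Lemma A2 : Am *m Am = D *: Am + E%:M + mu *: const_mx 1.
Proof.
case: srg => _ hk hl hm.
apply/matrixP => i j; rewrite Am2_entry !mxE.
have [<-|nij] := eqVneq i j.
  rewrite eirr mulr1n mulr1 mulr0 add0r.
  have -> : #|[set z | e (vx i) z && e (vx i) z]| = k.
    by rewrite -(hk (vx i)); apply: eq_card => z; rewrite !inE andbb.
  by rewrite /E /mu subrK.
rewrite mulr0n addr0 mulr1.
case exy: (e (vx i) (vx j)).
  by rewrite hl // /D /mu mulr1 subrK.
by rewrite hm ?vx_neq ?exy // mulr0 add0r.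
Qed.


Let c : int := D + W *+ 2.
Let d : int := E - D * W - W * W.
Let Jp : 'M[int]_#|T| := const_mx 1.
Let Jq : 'M[int]_#|{: C}| := const_mx 1.
Let Jpq : 'M[int]_(#|T|, #|{: C}|) := const_mx 1.
Let Jqp : 'M[int]_(#|{: C}|, #|T|) := const_mx 1.

Lemma Z0 (hk : k = (w * (w - 1))%N) : Ym *m Ym = c *: Ym + d%:M + mu *: Jp.
Proof.
rewrite Y_def // mulmxDl !mulmxDr A2 mul_mx_scalar mul_scalar_mx -scalar_mxM.
apply/matrixP => i j; rewrite !mxE /c /d /D /E; ring.
Qed.

Lemma cardLR (L : C) : (#|[set x | x \in val L]|%:R : int) = W.
Proof.
by rewrite /W cardsE cardL.
Qed.

Lemma NtJ : Nm^T *m Jpq = W *: Jq.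
Proof.
apply/matrixP => i j; rewrite !mxE; under eq_bigr do rewrite !mxE mulr1.
rewrite (sum_enum (fun x : T => ((x \in val (vc i)) : nat)%:R)) sumb_int.
by rewrite mulr1 cardLR.
Qed.

Lemma NtJp : Nm^T *m Jp = W *: Jqp.
Proof.
apply/matrixP => i j; rewrite !mxE; under eq_bigr do rewrite !mxE mulr1.
rewrite (sum_enum (fun x : T => ((x \in val (vc i)) : nat)%:R)) sumb_int.
by rewrite mulr1 cardLR.
Qed.

Lemma JNt (hk : k = (w * (w - 1))%N) : Jq *m Nm^T = W *: Jqp.
Proof.
apply/matrixP => i j; rewrite !mxE; under eq_bigr do rewrite !mxE mul1r.
rewrite (sum_enum (fun L : C => ((vx j \in val L) : nat)%:R)) sumb_int.
rewrite mulr1 /W; congr (_%:R); apply: etrans (cnt_w hk (vx j)).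
by rewrite /cnt; apply: eq_card => L; rewrite !inE andbb.
Qed.

Definition Xm := Bm *m Bm - c *: Bm - d%:M - mu *: Jq.

Lemma XN (hk : k = (w * (w - 1))%N) : Xm *m Nm^T = 0.
Proof.
have e1 : Bm *m Bm *m Nm^T = Nm^T *m (Ym *m Ym) by rewrite /Bm /Ym !mulmxA.
have e2 : Bm *m Nm^T = Nm^T *m Ym by rewrite /Bm /Ym !mulmxA.
rewrite /Xm !mulmxBl -!scalemxAl mul_scalar_mx JNt // e1 e2 Z0 //.
rewrite !mulmxDr -!scalemxAr mul_mx_scalar NtJp.
set U := Nm^T *m Ym.
apply/matrixP => i j; rewrite !mxE; ring.
Qed.

Lemma XB (hk : k = (w * (w - 1))%N) : Xm *m Bm = 0.
Proof. by rewrite /Bm mulmxA XN // mul0mx. Qed.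

Lemma XJ (hk : k = (w * (w - 1))%N) : Xm *m Jq = 0.
Proof.
have : W *: (Xm *m Jq) = 0 by rewrite scalemxAr -NtJ mulmxA XN // mul0mx.
move/eqP; rewrite scalemx_eq0 => /orP[|/eqP //].
rewrite /W pnatr_eq0 => /eqP w0; exfalso; have := w2; by rewrite w0.
Qed.

Lemma XX (hk : k = (w * (w - 1))%N) : Xm *m Xm = - d *: Xm.
Proof.
rewrite {2}/Xm !mulmxBr mulmxA XB // mul0mx -!scalemxAr XB // XJ //.
by rewrite mul_mx_scalar !scaler0 !subr0 sub0r scaleNr.
Qed.

Lemma tr_poly s (M : 'M[int]_s) :
  \tr (M *m M - c *: M - d%:M - mu *: const_mx 1) =
  \tr (M *m M) - c * \tr M - d *+ s - mu *+ s.
Proof.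
rewrite !(raddfB (@mxtrace _ s)) /= !mxtraceZ mxtrace_scalar.
have -> : \tr (const_mx 1 : 'M[int]_s) = s%:R.
  rewrite /mxtrace (eq_bigr (fun _ => 1)) ?sumr_const ?card_ord // => i _.
  by rewrite mxE.
by rewrite mulr_natr.
Qed.

Lemma trX (hk : k = (w * (w - 1))%N) : \tr Xm = 0.
Proof.
have h1 : \tr (Bm *m Bm) = \tr (Ym *m Ym).
  by rewrite /Bm /Ym -!mulmxA mxtrace_mulC !mulmxA.
have h2 : \tr Bm = \tr Ym by rewrite mxtrace_mulC.
have hz : Ym *m Ym - c *: Ym - d%:M - mu *: Jp = 0.
  by apply/matrixP => i j; rewrite Z0 // !mxE; ring.
move: (congr1 mxtrace hz); rewrite tr_poly -h1 -h2 (pq hk) linear0 => hz'.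
by rewrite /Xm tr_poly.
Qed.


Lemma X0 (hk : k = (w * (w - 1))%N) : Xm = 0.
Proof.
have BT : Bm^T = Bm by rewrite /Bm trmx_mul trmxK.
have XT : Xm^T = Xm.
  by rewrite /Xm !linearB /= !linearZ /= trmx_mul BT tr_scalar_mx trmx_const.
have htr : \tr (Xm *m Xm) = 0 by rewrite XX // mxtraceZ trX // mulr0.
have hs : \sum_i \sum_j Xm i j ^+ 2 = 0.
  apply: etrans htr; rewrite /mxtrace; apply: eq_bigr => i _; rewrite mxE.
  apply: eq_bigr => j _; rewrite expr2; congr (_ * _).
  by rewrite -{1}XT mxE.
suff hX : forall i j, Xm i j = 0 by apply/matrixP => i j; rewrite hX mxE.
move=> i j.
have h1 : forall i', \sum_j Xm i' j ^+ 2 = 0.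
  move=> i'; apply: (psumr_eq0P _ hs) => // i2 _.
  by apply: sumr_ge0 => j2 _; apply: sqr_ge0.
have h2 : Xm i j ^+ 2 = 0.
  by apply: (psumr_eq0P _ (h1 i)) => // j2 _; apply: sqr_ge0.
by apply/eqP; rewrite -sqrf_eq0; apply/eqP.
Qed.

Lemma vc_neq i j : i != j -> vc i != vc j.
Proof. by rewrite (inj_eq enum_val_inj). Qed.

Lemma Bdef : Bm = Cm + W%:M.
Proof.
apply/matrixP => i j; rewrite Bm_entry !mxE.
have [<-|nij] := eqVneq i j.
  rewrite /Cgraph /clq_adj eqxx /= add0r mulr1n.
  by rewrite -(cardLR (vc i)); congr (_%:R); apply: eq_card => x; rewrite !inE andbb.
rewrite mulr0n addr0 /Cgraph /clq_adj vc_neq //=.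
set S := [set x | _].
have -> : S = val (vc i) :&: val (vc j) by apply/setP => x; rewrite !inE.
congr (_%:R).
have [->|ne] := eqVneq (val (vc i) :&: val (vc j)) set0; first by rewrite cards0.
apply/eqP; rewrite eqn_leq card_gt0 ne andbT leqNgt; apply/negP.
case/card_gt1P => x [y [hx hy nxy]]; rewrite !inE in hx hy.
case/andP: hx => hxi hxj; case/andP: hy => hyi hyj.
by move: (vc_neq nij); rewrite (two_meet hxi hyi hxj hyj nxy) eqxx.
Qed.

Lemma Cm2 (hk : k = (w * (w - 1))%N) : Cm *m Cm = D *: Cm + E%:M + mu *: Jq.
Proof.
have BB : Bm *m Bm = c *: Bm + d%:M + mu *: Jq.
  have := X0 hk; rewrite /Xm => /eqP; rewrite !subr_eq add0r => /eqP ->.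
  by apply/matrixP => i j; rewrite !mxE; ring.
have CB : Cm = Bm - W%:M by rewrite Bdef addrK.
rewrite CB mulmxBl !mulmxBr BB mul_mx_scalar mul_scalar_mx -scalar_mxM.
apply/matrixP => i j; rewrite !mxE /c /d /D /E; ring.
Qed.


Lemma srgC (hk : k = (w * (w - 1))%N) : is_srg (@Cgraph T e w) n k l m.
Proof.
case: (srg) => hn hdeg hl hm.
have key (L M : C) : (#|[set Z | Cgraph L Z && Cgraph M Z]|%:R : int) =
    D * (Cgraph L M : nat)%:R + E *+ (L == M) + mu.
  have := congr1 (fun X : 'M[int]_#|{: C}| => X (enum_rank L) (enum_rank M)) (Cm2 hk).
  rewrite /= Cm2_entry !mxE /vc !enum_rankK (inj_eq enum_rank_inj) => ->.
  by rewrite mulr1.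
have LL (L : C) : Cgraph L L = false by rewrite /Cgraph /clq_adj eqxx.
split.
- apply: etrans _ hn; symmetry; exact: pq hk.
- move=> L; have := key L L; rewrite LL eqxx mulr1n mulr0 add0r /E /mu subrK.
  move/eqP; rewrite eqr_nat => /eqP <-.
  by apply: eq_card => Z; rewrite !inE andbb.
- move=> L M hLM; have := key L M.
  have nLM : (L == M) = false by apply/negbTE; case/andP: hLM.
  rewrite hLM nLM mulr0n addr0 mulr1 /D /mu subrK.
  by move/eqP; rewrite eqr_nat => /eqP.
- move=> L M nLM hLM; have := key L M.
  rewrite (negbTE hLM) (negbTE nLM) mulr0n addr0 mulr0 add0r /mu.
  by move/eqP; rewrite eqr_nat => /eqP.
Qed.

End Comb.

Theorem corollary4 (T : finType) (e : rel T) (w n k l m : nat) :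
  symmetric e -> irreflexive e ->
  2 <= w ->
  clique_regular e w ->
  is_srg e n k l m ->
  ~ boring e ->
  (is_srg (@Cgraph T e w) n k l m <-> k = w * (w - 1)).
Proof.
move=> esym eirr w2 creg srg _; split; last first.
  by move=> hk; apply: srgC.
case=> hq _ _ _.
have hq' : #|{: clq e w}| = n := hq.
have := pk eirr creg srg; rewrite hq'.
case: (srg) => hn _ _ _; rewrite hn.
have n0 : 0 < n.
  rewrite -hn; case: creg => [[x [y _]] _]; apply/card_gt0P; by exists x.
by move/eqP; rewrite eqn_pmul2l // => /eqP.
Qed.
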